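(* Let $R$ be a commutative ring, $M$ an $R$-module, $\underline{x}=x_1,\ldots,x_r$ an $M$-weakly pro-regular sequence and $\mathfrak{a}=\underline{x}R$. Then for every injective $R$-module $I$ the natural map $\Gamma_{\mathfrak{a}}(\operatorname{Hom}_R(M,I))\to\check{C}_{\underline{x}}\otimes_R\operatorname{Hom}_R(M,I)$ is a quasi-isomorphism.
   Context: $\Gamma_{\mathfrak{a}}(N)=\{n\in N:\mathfrak{a}^kn=0\text{ for some }k\}$, regarded as a complex in degree $0$. $\check{C}_{\underline{x}}=\bigotimes_j(0\to R\to R_{x_j}\to0)$ is the Čech complex (degrees $0,\ldots,r$). $\underline{x}$ is $M$-weakly pro-regular if for all $i>0$ the inverse system $\{H_i(\underline{x}^{(n)};M)\}_{n\ge1}$ of Koszul homology modules of $\underline{x}^{(n)}=x_1^n,\ldots,x_r^n$ (with the natural transition maps) is pro-zero, i.e. for every $n$ there is $m\ge n$ such that $H_i(\underline{x}^{(m)};M)\to H_i(\underline{x}^{(n)};M)$ is zero. *)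

(* Defs.v *)
From HB Require Import structures.
From mathcomp Require Import all_boot all_order all_algebra.
Set Implicit Arguments. Unset Strict Implicit. Unset Printing Implicit Defensive.
Import Order.TTheory GRing.Theory.
Local Open Scope ring_scope.

Section Defs.
Variable R : comPzRingType.

Definition injective_module (I : lmodType R) : Prop :=
  forall (A B : lmodType R) (f : A -> B) (g : A -> I),
    linear f -> injective f -> linear g ->
    exists h : B -> I, linear h /\ (forall a, h (f a) = g a).

Definition pos r (j : 'I_r) (J : {set 'I_r}) : nat := #|[set l in J | (l < j)%N]|.

(* ---------- Koszul complex K(y; M) ----------
   A chain is z : {set 'I_r} -> M; its degree-i part is (z J)_{#|J| = i},
   the coefficient of e_J.  Differential d(m e_J) = sum_{j in J} (-1)^pos y_j m e_{J\j}. *)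
Variable M : lmodType R.

Definition kos_d r (y : 'I_r -> R) (z : {set 'I_r} -> M) (J : {set 'I_r}) : M :=
  \sum_(j < r | j \notin J) ((-1) ^+ pos j J * y j) *: z (j |: J).

Definition kos_cycle r (y : 'I_r -> R) (i : nat) (z : {set 'I_r} -> M) : Prop :=
  forall J : {set 'I_r}, (#|J|.+1 = i)%N -> kos_d y z J = 0.

Definition kos_boundary r (y : 'I_r -> R) (i : nat) (z : {set 'I_r} -> M) : Prop :=
  exists w : {set 'I_r} -> M, forall J : {set 'I_r}, #|J| = i -> kos_d y w J = z J.

Definition xpow r (x : 'I_r -> R) (n : nat) : 'I_r -> R := fun j => x j ^+ n.

Definition kos_trans r (x : 'I_r -> R) (m n : nat) (z : {set 'I_r} -> M) :
  {set 'I_r} -> M := fun J => (\prod_(j in J) x j ^+ (m - n)) *: z J.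

(* {H_i(x^(n);M)}_{n>=1} is pro-zero for all i > 0 *)
Definition weakly_pro_regular r (x : 'I_r -> R) : Prop :=
  forall i : nat, (0 < i)%N -> forall n : nat, (0 < n)%N ->
  exists2 m : nat, (n <= m)%N &
    forall z : {set 'I_r} -> M, kos_cycle (xpow x m) i z ->
      kos_boundary (xpow x n) i (kos_trans x m n z).

(* ---------- Cech complex tensored with N = Hom_R(M, I) ----------
   (C_x (x) N)^i = (+)_{#|J| = i} N_{x_J}, x_J = prod_{j in J} x_j.
   An element of N_{s} is represented by a pair (f, k) standing for f / s^k,
   with f : M -> I linear. *)
Variable I : lmodType R.

Definition xprod r (x : 'I_r -> R) (J : {set 'I_r}) : R := \prod_(j in J) x j.

Definition loc_eq (s : R) (p q : (M -> I) * nat) : Prop :=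
  exists t : nat, forall u : M,
    s ^+ (t + q.2) *: p.1 u = s ^+ (t + p.2) *: q.1 u.

Definition frac_add (s : R) (p q : (M -> I) * nat) : (M -> I) * nat :=
  (fun u => s ^+ q.2 *: p.1 u + s ^+ p.2 *: q.1 u, (p.2 + q.2)%N).

Definition frac_zero : (M -> I) * nat := (fun _ => 0, 0%N).

Definition cochain r (c : {set 'I_r} -> (M -> I) * nat) : Prop :=
  forall J, linear (c J).1.

(* Cech differential: (dc)_J = sum_{j in J} (-1)^pos(j,J) * image of c_{J\j}
   under the localization map N_{x_{J\j}} -> N_{x_J}; all terms are written
   over the common denominator x_J^K. *)
Definition cech_d r (x : 'I_r -> R) (c : {set 'I_r} -> (M -> I) * nat)
    (J : {set 'I_r}) : (M -> I) * nat :=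
  let K := (\max_(j in J) (c (J :\ j)).2)%N in
  (fun u => \sum_(j in J)
       ((-1) ^+ pos j J * (xprod x (J :\ j) ^+ (K - (c (J :\ j)).2) * x j ^+ K))
         *: (c (J :\ j)).1 u, K).

Definition cech_cocycle r (x : 'I_r -> R) (i : nat) (c : {set 'I_r} -> (M -> I) * nat) : Prop :=
  forall J : {set 'I_r}, #|J| = i.+1 -> loc_eq (xprod x J) (cech_d x c J) frac_zero.

Definition cech_cohomologous r (x : 'I_r -> R) (i : nat)
    (c c' : {set 'I_r} -> (M -> I) * nat) : Prop :=
  exists2 b, cochain b &
    forall J : {set 'I_r}, #|J| = i ->
      loc_eq (xprod x J) (c J) (frac_add (xprod x J) (cech_d x b J) (c' J)).

Definition cech_coboundary r (x : 'I_r -> R) (i : nat) c : Prop :=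
  cech_cohomologous x i c (fun _ => frac_zero).

Definition in_gen_ideal r (x : 'I_r -> R) (a : R) : Prop :=
  exists c : 'I_r -> R, a = \sum_(j < r) c j * x j.

(* a^k f = 0 : every product of k elements of a kills f
   (a^k is additively generated by such products) *)
Definition in_Gamma r (x : 'I_r -> R) (f : M -> I) : Prop :=
  exists k : nat, forall s : seq R, size s = k ->
    (forall a, a \in s -> in_gen_ideal x a) ->
    forall u : M, (\prod_(a <- s) a) *: f u = 0.

(* the natural map Gamma_a(N) -> (C_x (x) N)^0 = N_1 = N, f |-> f/1 *)
Definition gamma_to_cech r (f : M -> I) : {set 'I_r} -> (M -> I) * nat :=
  fun _ => (f, 0%N).

(* the natural map Gamma_a(N) -> C_x (x) N is a quasi-isomorphism
   (Gamma_a(N) sits in degree 0) *)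
Definition gamma_cech_qis r (x : 'I_r -> R) : Prop :=
  (* it is a chain map: images are 0-cocycles *)
  (forall f, linear f -> in_Gamma x f -> cech_cocycle x 0 (gamma_to_cech f)) /\
  (* H^0 : injective *)
  (forall f g, linear f -> linear g -> in_Gamma x f -> in_Gamma x g ->
     cech_cohomologous x 0 (gamma_to_cech f) (gamma_to_cech g) -> f = g) /\
  (* H^0 : surjective *)
  (forall c, cochain c -> cech_cocycle x 0 c ->
     exists f, [/\ linear f, in_Gamma x f & cech_cohomologous x 0 c (gamma_to_cech f)]) /\
  (* H^i = 0 for i > 0 (H^i(Gamma_a(N)) = 0 there) *)
  (forall i : nat, (0 < i)%N -> forall c, cochain c -> cech_cocycle x i c ->
     cech_coboundary x i c).

End Defs.

(* Main.v *)
Require Import Defs.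
From HB Require Import structures.
From mathcomp Require Import all_boot all_order all_algebra.
From mathcomp Require Import ring zify.
From Stdlib Require Import ClassicalEpsilon FunctionalExtensionality.
Set Implicit Arguments. Unset Strict Implicit. Unset Printing Implicit Defensive.
Import Order.TTheory GRing.Theory.
Local Open Scope ring_scope.

Definition pb (P : Prop) : bool := if excluded_middle_informative P then true else false.
Lemma pbP (P : Prop) : reflect P (pb P).
Proof. rewrite /pb; case: excluded_middle_informative => h; by constructor. Qed.

Section Img.
Variables (R : comPzRingType) (V W : lmodType R) (D : V -> W).
Hypothesis lD : linear D.

Lemma lin0 : D 0 = 0.
Proof. have h := lD 1 0 0; rewrite scale1r addr0 scale1r in h.
by apply: (@addrI _ (D 0)); rewrite addr0 -h. Qed.

Definition imgP : pred W := fun w => pb (exists v, D v = w).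

Lemma imgP_closed : subsemimod_closed imgP.
Proof.
split; first split.
- by apply/pbP; exists 0; rewrite lin0.
- move=> u v /pbP [a <-] /pbP [b <-]; apply/pbP; exists (a + b).
  by have := lD 1 a b; rewrite !scale1r.
- move=> a u /pbP [b <-]; apply/pbP; exists (a *: b).
  by have := lD a b 0; rewrite !addr0 lin0 addr0.
Qed.

Definition Img of linear D := {w : W | imgP w}.
Local Notation ImgT := (Img lD).
HB.instance Definition _ := [isSub of ImgT for (@sval W imgP)].
HB.instance Definition _ := [Choice of ImgT by <:].
HB.instance Definition _ := GRing.SubChoice_isSubLmodule.Build R W imgP ImgT imgP_closed.

End Img.

Lemma factor_inj (R : comPzRingType) (V W I : lmodType R) (D : V -> W) (psi : V -> I) :
  injective_module I -> linear D -> linear psi ->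
  (forall v, D v = 0 -> psi v = 0) ->
  exists h : W -> I, linear h /\ forall v, h (D v) = psi v.
Proof.
move=> hI lD lp hk.
have psi0 := lin0 lp.
have pe : forall a b, D a = D b -> psi a = psi b.
  move=> a b e; apply/eqP; rewrite -subr_eq0; apply/eqP.
  have e1 := lp (-1) b a; rewrite !scaleN1r in e1.
  rewrite addrC -e1; apply: hk.
  have e2 := lD (-1) b a; rewrite !scaleN1r in e2; by rewrite e2 e addNr.
pose g (a : Img lD) : I := psi (proj1_sig (constructive_indefinite_description _ (elimT (pbP _) (valP a)))).
have gE : forall a v, D v = val a -> g a = psi v.
  move=> a v e; rewrite /g; case: constructive_indefinite_description => w /= ew.
  by apply: pe; rewrite ew e.
have lg : linear g.
  move=> a u v.
  case/pbP: (valP u) => u' eu; case/pbP: (valP v) => v' ev.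
  rewrite (gE u u') // (gE v v') // (gE _ (a *: u' + v')) ?lp //.
  by rewrite lD eu ev.
have [h [lh hh]] := hI (Img lD) W val g (fun a u v => erefl) val_inj lg.
exists h; split=> // v.
have iv : imgP D (D v) by apply/pbP; exists v.
by rewrite -[D v]/(val (exist _ (D v) iv : Img lD)) hh (gE _ v).
Qed.

Section P.
Variables (R : comPzRingType) (M I : lmodType R) (r : nat) (x : 'I_r -> R).

Lemma kill_prod T : forall (t : 'I_r -> nat) (f : M -> I),
  (\sum_j t j)%N = T ->
  (forall j u, x j ^+ t j *: f u = 0) ->
  forall s, size s = T.+1 -> (forall a, a \in s -> in_gen_ideal x a) ->
  forall u, (\prod_(a <- s) a) *: f u = 0.
Proof.
elim: T => [|T IH] t f st hf [|a s] //= [hs] hi u;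
  rewrite big_cons; have [c ->] := hi a (mem_head _ _);
  rewrite mulr_suml scaler_suml big1 // => j _;
  have -> : c j * x j * \prod_(a0 <- s) a0 = c j * \prod_(a0 <- s) a0 * x j by ring.
- rewrite -scalerA; case tj: (t j) => [|tj'].
    by have := hf j u; rewrite tj expr0 scale1r => ->; rewrite !scaler0.
  by move: st; rewrite (bigD1 j) //= tj.
- rewrite -scalerA; case tj: (t j) => [|tj'].
    by have := hf j u; rewrite tj expr0 scale1r => ->; rewrite !scaler0.
  pose t2 l := if l == j then tj' else t l.
  rewrite -scalerA (IH t2 (fun u => x j *: f u)) ?scaler0 //.
  + move: st; rewrite (bigD1 j) //= tj (bigD1 j (P := xpredT)) //= /t2 eqxx.
    rewrite [X in _ -> (_ + X)%N = _](eq_bigr t) => [|l /negbTE ->] //.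
    by rewrite addSn => -[].
  + move=> l v; rewrite /t2; case: eqP => [->|/eqP ne].
      by rewrite scalerA -exprSr -tj hf.
    by rewrite scalerA mulrC -scalerA hf scaler0.
  + by move=> b bs; apply: hi; rewrite inE bs orbT.
Qed.

Lemma prod_nseq (a : R) k : \prod_(b <- nseq k a) b = a ^+ k.
Proof. elim: k => [|k IH]; by rewrite ?big_nil ?expr0 // big_cons IH exprS. Qed.

Lemma gen_x j : in_gen_ideal x (x j).
Proof.
exists (fun l => if l == j then 1 else 0).
rewrite (bigD1 j) //= eqxx mul1r big1 ?addr0 // => l /negbTE ->; by rewrite mul0r.
Qed.

Lemma gamma_kill (f : M -> I) : in_Gamma x f -> exists k, forall j u, x j ^+ k *: f u = 0.
Proof.
move=> [k hk]; exists k => j u; rewrite -prod_nseq; apply: hk; first by rewrite size_nseq.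
by move=> a /nseqP [-> _]; exact: gen_x.
Qed.

Lemma kill_gamma (f : M -> I) (t : 'I_r -> nat) :
  (forall j u, x j ^+ t j *: f u = 0) -> in_Gamma x f.
Proof. move=> h; exists (\sum_j t j).+1; exact: kill_prod. Qed.

Lemma xprodD1 (j : 'I_r) (J : {set 'I_r}) : j \in J -> xprod x J = x j * xprod x (J :\ j).
Proof. by move=> hj; rewrite /xprod (big_setD1 _ hj). Qed.

Lemma H0_chain (f : M -> I) : linear f -> in_Gamma x f -> cech_cocycle x 0 (gamma_to_cech (r:=r) f).
Proof.
move=> lf /gamma_kill [k hk] J _; exists k => u /=.
rewrite scaler0 scaler_sumr big1 // => j hj.
rewrite scalerA mulrC -scalerA (xprodD1 hj) addn0 exprMn [x j ^+ k * _]mulrC -[(_ * x j ^+ k) *: _]scalerA hk.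
by rewrite !scaler0.
Qed.

Lemma H0_inj (f g : M -> I) : cech_cohomologous x 0 (gamma_to_cech (r:=r) f) (gamma_to_cech g) -> f = g.
Proof.
move=> [b _ hb]; have [t ht] := hb set0 (cards0 _).
apply: functional_extensionality => u; have := ht u.
by rewrite /= /xprod big_set0 !expr1n !scale1r big_set0 add0r.
Qed.


Lemma pos_set1 (j : 'I_r) : pos j [set j] = 0%N.
Proof.
rewrite /pos; apply/eqP; rewrite cards_eq0; apply/eqP/setP => l; rewrite !inE.
by case: eqP => // ->; rewrite ltnn.
Qed.

Lemma H0_surj (c : {set 'I_r} -> (M -> I) * nat) : cochain c -> cech_cocycle x 0 c ->
  exists f, [/\ linear f, in_Gamma x f & cech_cohomologous x 0 c (gamma_to_cech f)].
Proof.
move=> hc hco; exists (c set0).1; split.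
- exact: hc.
- have ex : forall j, exists t, forall u, x j ^+ t *: (c set0).1 u = 0.
    move=> j; have [t ht] := hco [set j] (cards1 j).
    exists (t + (c set0).2)%N => u; have := ht u.
    rewrite /= /xprod !big_set1 setDv pos_set1 expr0 subnn expr0 !mul1r scaler0.
    by rewrite addn0 scalerA -exprD.
  pose t j := proj1_sig (constructive_indefinite_description _ (ex j)).
  apply: (@kill_gamma _ t) => j; rewrite /t; case: constructive_indefinite_description => //.
- exists (fun _ => @frac_zero _ M I); first by move=> J a u v; rewrite scaler0 addr0.
  move=> J /eqP; rewrite cards_eq0 => /eqP ->; exists 0%N => u.
  by rewrite /= /xprod big_set0 !expr1n !scale1r big_set0 add0r.
Qed.


Lemma pos_D1 (j : 'I_r) (A : {set 'I_r}) : pos j (A :\ j) = pos j A.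
Proof.
rewrite /pos; have -> // : [set l in A :\ j | (l < j)%N] = [set l in A | (l < j)%N].
apply/setP => l; rewrite !inE.
by case: eqP => // ->; rewrite ltnn !andbF.
Qed.

Lemma reindex_kos (V : zmodType) (i : nat) (F : 'I_r -> {set 'I_r} -> V) :
  \sum_(J : {set 'I_r} | #|J| == i) \sum_(j | j \notin J) F j J =
  \sum_(L : {set 'I_r} | #|L| == i.+1) \sum_(j in L) F j (L :\ j).
Proof.
rewrite (eq_bigr (fun J : {set 'I_r} => \sum_j (if j \notin J then F j J else 0)));
  last by move=> J _; rewrite big_mkcond.
rewrite [RHS](eq_bigr (fun L : {set 'I_r} => \sum_j (if j \in L then F j (L :\ j) else 0)));
  last by move=> L _; rewrite big_mkcond.
rewrite big_mkcond [RHS]big_mkcond /=.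
rewrite (eq_bigr (fun J : {set 'I_r} => \sum_j (if (#|J| == i) && (j \notin J) then F j J else 0))); last first.
  by move=> J _; case: eqP => _ //=; rewrite big1.
rewrite [RHS](eq_bigr (fun L : {set 'I_r} => \sum_j (if (#|L| == i.+1) && (j \in L) then F j (L :\ j) else 0))); last first.
  by move=> L _; case: eqP => _ //=; rewrite big1.
rewrite exchange_big [RHS]exchange_big; apply: eq_bigr => j _.
rewrite -big_mkcond -[RHS]big_mkcond /=.
rewrite [RHS](reindex_onto (fun J => j |: J) (fun L => L :\ j)) /=; last first.
  by move=> L /andP [_ hL]; rewrite setD1K.
apply: eq_big => J.
  case hj: (j \in J) => /=.
    rewrite andbF; symmetry; apply/negbTE/negP => /andP [_ /eqP e].
    by have := setD11 j (j |: J); rewrite e hj.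
  by rewrite cardsU1 hj setU11 setU1K ?hj // eqxx !andbT /=.
by move=> /andP [_ hj]; rewrite setU1K.
Qed.

Lemma kos_d_dl (y : 'I_r -> R) (J L : {set 'I_r}) (u : M) :
  kos_d y (fun K => if K == J then u else 0) L =
  \sum_(j in J) ((-1) ^+ pos j J * y j) *: (if J :\ j == L then u else 0).
Proof.
rewrite /kos_d big_mkcond [RHS]big_mkcond /=; apply: eq_bigr => j _.
have E : (j \notin L) && (j |: L == J) = (j \in J) && (J :\ j == L).
  apply/andP/andP => [[hjL /eqP <-]|[hjJ /eqP <-]].
    by rewrite setU11 setU1K.
  by rewrite setD11 setD1K.
case h1: (j \notin L); case h2: (j \in J); move: E; rewrite ?h1 ?h2 /= => E.
- rewrite E; case e: (J :\ j == L); last by rewrite /= !scaler0.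
  by move/eqP: e => <-; rewrite pos_D1.
- by rewrite E /= scaler0.
- by rewrite -E /= scaler0.
- by [].
Qed.

End P.

Lemma linZ (R : comPzRingType) (V W : lmodType R) (f : V -> W) : linear f ->
  forall a u, f (a *: u) = a *: f u.
Proof. by move=> lf a u; have := lf a u 0; rewrite !addr0 (lin0 lf) addr0. Qed.

Lemma linD (R : comPzRingType) (V W : lmodType R) (f : V -> W) : linear f ->
  forall u v, f (u + v) = f u + f v.
Proof. by move=> lf u v; have := lf 1 u v; rewrite !scale1r. Qed.

Lemma lin_sum (R : comPzRingType) (V W : lmodType R) (f : V -> W) : linear f ->
  forall (T : Type) (s : seq T) (P : pred T) (F : T -> V),
  f (\sum_(t <- s | P t) F t) = \sum_(t <- s | P t) f (F t).
Proof. move=> lf T s P F; exact: (big_morph f (linD lf) (lin0 lf)). Qed.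

Lemma max_const (r : nat) (J : {set 'I_r}) (m : nat) : (0 < #|J|)%N -> (\max_(j in J) m)%N = m.
Proof.
rewrite big_const; case: #|J| => // k _; elim: k => [|k IH]; first by rewrite /= maxn0.
by rewrite iterS IH maxnn.
Qed.

Section Main.
Variables (R : comPzRingType) (M I : lmodType R) (r : nat) (x : 'I_r -> R).
Hypotheses (hx : weakly_pro_regular M x) (hI : injective_module I).
Variables (i : nat) (i0 : (0 < i)%N) (c : {set 'I_r} -> (M -> I) * nat).
Hypotheses (hc : cochain c) (hco : cech_cocycle x i c).

Let spec J t := forall u, xprod x J ^+ t *: (cech_d x c J).1 u = 0.
Lemma ex_t (J : {set 'I_r}) : exists t, #|J| = i.+1 -> spec J t.
Proof.
case: (boolP (#|J| == i.+1)) => [/eqP hJ|hJ]; last by exists 0%N => /eqP; rewrite (negbTE hJ).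
have [t ht] := hco hJ; exists t => _ u; have := ht u; by rewrite addn0 scaler0.
Qed.
Let tf (J : {set 'I_r}) := proj1_sig (constructive_indefinite_description _ (ex_t J)).
Lemma tfP (J : {set 'I_r}) : #|J| = i.+1 -> spec J (tf J).
Proof. rewrite /tf; by case: constructive_indefinite_description. Qed.

Let kk := (\max_(L : {set 'I_r}) (c L).2)%N.
Let tt := (\max_(L : {set 'I_r}) tf L)%N.
Let n := (kk + tt).+1.

Lemma glin (e : nat) (L : {set 'I_r}) : linear (fun u => xprod x L ^+ e *: (c L).1 u).
Proof. by move=> a u v /=; rewrite hc scalerDr !scalerA mulrC. Qed.

Let g1 (L : {set 'I_r}) (u : M) := xprod x L ^+ (n - (c L).2) *: (c L).1 u.

Lemma NC (L : {set 'I_r}) : #|L| = i.+1 -> forall u,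
  \sum_(j in L) ((-1) ^+ pos j L * x j ^+ n) *: g1 (L :\ j) u = 0.
Proof.
move=> hL u; have := tfP hL u; rewrite /cech_d /=.
set K := (\max_(j in L) (c (L :\ j)).2)%N => hs.
have Kk : (K <= kk)%N by apply/bigmax_leqP => j _; exact: leq_bigmax.
have Tt : (tf L <= tt)%N by exact: leq_bigmax.
pose e := (n - K - tf L)%N.
rewrite -[RHS](scaler0 _ (xprod x L ^+ e)) -[in RHS]hs !scaler_sumr.
apply: eq_bigr => j hj.
have kK : ((c (L :\ j)).2 <= K)%N by rewrite /K (bigD1 j hj) /= leq_maxl.
have E1 : n = (e + tf L + K)%N by rewrite /e /n; lia.
have E2 : (n - (c (L :\ j)).2 = e + tf L + (K - (c (L :\ j)).2))%N by rewrite /e /n; lia.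
rewrite /g1 !scalerA; congr (_ *: _).
rewrite E2 E1 !exprD (xprodD1 x hj) !exprMn.
move: (x j ^+ e) (x j ^+ tf L) (x j ^+ K) (xprod x (L :\ j) ^+ e)
  (xprod x (L :\ j) ^+ tf L) (xprod x (L :\ j) ^+ (K - (c (L :\ j)).2)) ((-1) ^+ pos j L).
move=> *; ring.
Qed.

Let Pm (m : nat) := forall z : {set 'I_r} -> M, kos_cycle (xpow x m) i z ->
      kos_boundary (xpow x n) i (kos_trans x m n z).
Lemma ex_m : exists m, (n <= m)%N /\ Pm m.
Proof. have [m h1 h2] := hx i0 (ltn0Sn (kk + tt)); by exists m. Qed.
Let m := proj1_sig (constructive_indefinite_description _ ex_m).
Lemma mP : (n <= m)%N /\ Pm m.
Proof. rewrite /m; by case: constructive_indefinite_description. Qed.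

Let V := {ffun {set 'I_r} -> M}.
Let mask (z : V) : {set 'I_r} -> M := fun K => if #|K| == i then z K else 0.
Let Dm (z : V) : V := [ffun L => kos_d (xpow x m) (mask z) L].
Let g2 (L : {set 'I_r}) (u : M) := xprod x L ^+ (m - (c L).2) *: (c L).1 u.
Let psi (z : V) : I := \sum_(J : {set 'I_r} | #|J| == i) g2 J (z J).

Lemma kk_le L : ((c L).2 <= kk)%N.
Proof. exact: leq_bigmax. Qed.

Lemma Dm_lin : linear Dm.
Proof.
move=> a z1 z2; apply/ffunP => L; rewrite !ffunE /kos_d scaler_sumr -big_split /=.
apply: eq_bigr => j _; rewrite /mask !ffunE; case: ifP => _; last by rewrite !scaler0 addr0.
by rewrite scalerDr !scalerA mulrC.
Qed.

Lemma psi_lin : linear psi.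
Proof.
move=> a z1 z2; rewrite /psi scaler_sumr -big_split /=; apply: eq_bigr => J _.
by rewrite !ffunE /g2 (glin _ _ a).
Qed.

Lemma psi_ker z : Dm z = 0 -> psi z = 0.
Proof.
move=> hz; have [nm hP] := mP.
have cyc : kos_cycle (xpow x m) i (mask z).
  by move=> J hJ; have := congr1 (fun F : V => F J) hz; rewrite !ffunE.
have [b hb] := hP _ cyc.
rewrite /psi (eq_bigr (fun J => g1 J (kos_d (xpow x n) b J))); last first.
  move=> J /eqP hJ; rewrite hb // /kos_trans /mask hJ eqxx /g1 /g2.
  rewrite (linZ (hc J)) scalerA prodrXl -/(xprod x J) -exprD.
  have := kk_le J; rewrite /n => h1; congr (_ ^+ _ *: _); lia.
have lg1 : forall J, linear (g1 J) := fun J => glin _ J.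
rewrite (eq_bigr (fun J : {set 'I_r} => \sum_(j : 'I_r | j \notin J) ((-1) ^+ pos j J * x j ^+ n) *: g1 J (b (j |: J)))); last first.
  by move=> J _; rewrite /kos_d (lin_sum (lg1 J)); apply: eq_bigr => j _; rewrite (linZ (lg1 J)).
rewrite reindex_kos big1 // => L /eqP hL; rewrite -[RHS](NC hL (b L)).
by apply: eq_bigr => j hj; rewrite pos_D1 setD1K.
Qed.

Lemma Hi_main : cech_coboundary x i c.
Proof.
have [h [lh hh]] := factor_inj hI Dm_lin psi_lin psi_ker.
pose dlf (L : {set 'I_r}) (u : M) : V := [ffun K => if K == L then u else 0].
have dlf_lin L : linear (dlf L).
  move=> a u v; apply/ffunP => K; rewrite !ffunE; case: eqP => _; by rewrite ?scaler0 ?addr0.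
exists (fun L => (fun u => h (dlf L u), m)).
  by move=> L a u v /=; rewrite (dlf_lin L) lh.
move=> J hJ; exists 0%N => u /=.
have hD : Dm (dlf J u) = \sum_(j in J) ((-1) ^+ pos j J * x j ^+ m) *: dlf (J :\ j) u.
  apply/ffunP => L; rewrite ffunE sum_ffunE.
  have -> : mask (dlf J u) = (fun K => if K == J then u else 0).
    apply: functional_extensionality => K; rewrite /mask ffunE.
    case: ifP => // hK; case: eqP => // eKJ; move: hK; by rewrite eKJ hJ eqxx.
  by rewrite (kos_d_dl (xpow x m) J L u); apply: eq_bigr => j _; rewrite /dlf !ffunE eq_sym.
have hpsi : psi (dlf J u) = g2 J u.
  rewrite /psi (bigD1 J) /=; last by rewrite hJ.
  rewrite ffunE eqxx big1 ?addr0 // => L0 /andP [_ ne]; rewrite ffunE (negbTE ne).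
  exact: (lin0 (glin _ _)).
have := hh (dlf J u); rewrite hpsi hD (lin_sum lh).
move=> E.
have E' : \sum_(t in J) ((-1) ^+ pos t J * x t ^+ m) *: h (dlf (J :\ t) u) = g2 J u.
  by rewrite -E; apply: eq_bigr => t _; rewrite (linZ lh).
have Jp : (0 < #|J|)%N by rewrite hJ.
rewrite (max_const m Jp) subnn expr0 scale1r scaler0 addr0.
under eq_bigr => j _ do rewrite mul1r.
rewrite E' /g2 scalerA -exprD add0n addn0; congr (_ ^+ _ *: _).
have := kk_le J; have [nm _] := mP; rewrite /n; lia.
Qed.

End Main.

Theorem corollary5p4 (R : comPzRingType) (M : lmodType R) (r : nat) (x : 'I_r -> R)
  (hx : weakly_pro_regular M x) (I : lmodType R) (hI : injective_module I) :
  gamma_cech_qis M I x.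
Proof.
split; [|split; [|split]].
- move=> f lf hg; exact: H0_chain.
- move=> f g _ _ _ _; exact: H0_inj.
- move=> c hc hco; exact: H0_surj.
- move=> i i0 c hc hco; exact: (Hi_main hx hI i0 hc hco).
Qed.
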